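(* Let $T$ be a tree of order $n \geq 4$, and let $u$ and $v$ be two distinct vertices of $T$ which are non-adjacent in $\Lambda(T)$. Then exactly one of the following cases occurs: (1) $u$ and $v$ are two leaves of $T$, both adjacent to a common third vertex of $T$; (2) $u$ and $v$ are adjacent in $T$, and every vertex of $T$ other than $u$ and $v$ is a leaf adjacent to exactly one of $u$ and $v$; (3) $u$ and $v$ are at distance $3$ in $T$, joined by the path $u - w - x - v$, and every vertex of $T$ other than $u, w, x, v$ is a leaf adjacent to exactly one of $u$ and $v$.
   Context: All graphs are simple and finite. For a graph $G$ and disjoint $X, Y \subseteq V(G)$, $E(X,Y)$ denotes the set of edges with one endpoint in $X$ and the other in $Y$. An ordered pair $(X,Y)$ of disjoint subsets of $V(G)$ with $|X|=|Y|=2$ is an odd pair of $G$ if $|E(X,Y)|$ is odd. A $2$-subset $\{u,v\}\subseteq V(G)$ is an odd set if it is the first component of some odd pair of $G$. The graph $\Lambda(G)$ has vertex set $V(G)$, and $uv$ is an edge of $\Lambda(G)$ iff $\{u,v\}$ is an odd set of $G$. *)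

(* Defs.v *)
From mathcomp Require Import all_boot.
Set Implicit Arguments. Unset Strict Implicit. Unset Printing Implicit Defensive.

Definition simple_graph (T : finType) (e : rel T) : Prop :=
  symmetric e /\ irreflexive e.

Definition connected_graph (T : finType) (e : rel T) : Prop :=
  forall x y : T, connect e x y.

Definition acyclic_graph (T : finType) (e : rel T) : Prop :=
  forall c : seq T, 3 <= size c -> uniq c -> ~~ cycle e c.

Definition is_tree (T : finType) (e : rel T) : Prop :=
  simple_graph e /\ connected_graph e /\ acyclic_graph e.

Definition nbhd (T : finType) (e : rel T) (x : T) : {set T} := [set y | e x y].
Definition leaf (T : finType) (e : rel T) (x : T) : bool := #|nbhd e x| == 1.

Definition nedges (T : finType) (e : rel T) (X Y : {set T}) : nat :=
  #|[set p : T * T | [&& p.1 \in X, p.2 \in Y & e p.1 p.2]]|.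

Definition odd_pair (T : finType) (e : rel T) (X Y : {set T}) : bool :=
  [&& [disjoint X & Y], #|X| == 2, #|Y| == 2 & odd (nedges e X Y)].

Definition odd_set (T : finType) (e : rel T) (X : {set T}) : bool :=
  [exists Y : {set T}, odd_pair e X Y].

Definition Lambda (T : finType) (e : rel T) : rel T :=
  fun u v => (u != v) && odd_set e [set u; v].

Definition exactly_one3 (P Q R : Prop) : Prop :=
  (P /\ ~ Q /\ ~ R) \/ (~ P /\ Q /\ ~ R) \/ (~ P /\ ~ Q /\ R).

(* Main.v *)
From mathcomp Require Import all_boot.
Require Import Defs.
From mathcomp Require Import zify.
Lemma sum2 (T : finType) (a b : T) (F : T -> nat) : a != b ->
  \sum_j (if j \in [set a; b] then F j else 0) = F a + F b.
Proof.
move=> ab.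
rewrite (bigD1 a) ?inE ?eqxx // (bigD1 b) /= ?inE ?eqxx ?orbT; last by rewrite eq_sym.
rewrite big1 ?addn0 //.
by move=> j /andP[ja jb]; rewrite !inE (negbTE jb) (negbTE ja).
Qed.

Lemma nedges2 (T : finType) (e : rel T) (u v a b : T) : u != v -> a != b ->
  nedges e [set u; v] [set a; b] = e u a + e u b + (e v a + e v b).
Proof.
move=> uv ab.
rewrite /nedges -sum1_card big_mkcond /=.
rewrite (eq_bigr (fun p : T * T => (fun i j => if i \in [set u; v] then (if j \in [set a; b] then nat_of_bool (e i j) else 0) else 0) p.1 p.2)); last first.
  by move=> [i j] _; rewrite inE /=; case: (i \in _); case: (j \in _); case: (e i j).
rewrite -(pair_bigA _ (fun i j => if i \in [set u; v] then (if j \in [set a; b] then nat_of_bool (e i j) else 0) else 0)) /=.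
rewrite (eq_bigr (fun i => if i \in [set u; v] then \sum_j (if j \in [set a; b] then nat_of_bool (e i j) else 0) else 0)); last first.
  by move=> i _; case: (i \in _) => //; rewrite big1.
by rewrite sum2 // !sum2.
Qed.

Ltac dsplit := repeat match goal with |- is_true (_ && _) => apply/andP; split end.
Ltac dtac := rewrite /= ?inE ?negb_or; dsplit; try done; try (by rewrite eq_sym).

Lemma cross (T : finType) (e : rel T) (S : {pred T}) x y : symmetric e ->
  connect e x y -> x \in S -> y \notin S -> exists a b, [/\ e a b, a \in S & b \notin S].
Proof.
move=> sym cxy xS yS.
case: (boolP [exists a, exists b, [&& e a b, a \in S & b \notin S]]).
  by move=> /existsP[a /existsP[b /and3P[h1 h2 h3]]]; exists a, b.
move=> H; exfalso.
have cl : closed e S.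
  move=> a b eab; apply/idP/idP => [aS|bS]; apply/negPn/negP => nS; move/negP: H; apply.
    by apply/existsP; exists a; apply/existsP; exists b; rewrite eab aS nS.
  by apply/existsP; exists b; apply/existsP; exists a; rewrite sym eab bS nS.
have := closed_connect cl cxy; rewrite xS => h; by rewrite -h in yS.
Qed.

Lemma leafI (T : finType) (e : rel T) z t : e z t -> (forall y, e z y -> y = t) -> leaf e z.
Proof.
move=> ezt H; rewrite /leaf; apply/cards1P; exists t; apply/setP => y.
rewrite !inE; apply/idP/eqP => [/H //|->//].
Qed.

Lemma leafE (T : finType) (e : rel T) z a b : leaf e z -> e z a -> e z b -> a = b.
Proof.
rewrite /leaf => /cards1P[t ht] ea eb.
have : a \in nbhd e z by rewrite inE.
have : b \in nbhd e z by rewrite inE.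
by rewrite ht !inE => /eqP -> /eqP ->.
Qed.

Lemma neq_of (T : finType) (e : rel T) x y : irreflexive e -> e x y -> x != y.
Proof. by move=> irr exy; apply: contraTneq exy => ->; rewrite irr. Qed.

Lemma leaf2 (T : finType) (e : rel T) u v z : symmetric e -> irreflexive e ->
  (forall c : seq T, 3 <= size c -> uniq c -> cycle e c -> False) ->
  (forall z, z != u -> z != v -> e u z (+) e v z) ->
  e u v -> z != u -> z != v -> e u z -> leaf e z.
Proof.
move=> sym irr cyc allodd euv zu zv euz.
apply: (@leafI T e z u); first by rewrite sym.
move=> y ezy; case: (eqVneq y u) => // yu; exfalso.
have zy := @neq_of T e _ _ irr ezy.
have uv := @neq_of T e _ _ irr euv.
case: (eqVneq y v) => [yv|yv].
  by have := allodd z zu zv; rewrite euz sym -yv ezy.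
have := allodd y yu yv; case euy: (e u y) => /= evy.
  by apply: (cyc [:: z; y; u]); dtac; rewrite sym.
by apply: (cyc [:: z; u; v; y]); dtac; rewrite sym.
Qed.

Lemma leaf3 (T : finType) (e : rel T) u v a b z : symmetric e -> irreflexive e ->
  (forall c : seq T, 3 <= size c -> uniq c -> cycle e c -> False) ->
  (forall z, z != u -> z != v -> e u z (+) e v z) ->
  e u a -> e a b -> e b v -> u != v -> u != b -> a != v ->
  z != u -> z != v -> z != a -> z != b -> e u z -> leaf e z.
Proof.
move=> sym irr cyc allodd eua eab ebv uv ub av zu zv za zb euz.
have ua := @neq_of T e _ _ irr eua.
have ab := @neq_of T e _ _ irr eab.
have bv := @neq_of T e _ _ irr ebv.
apply: (@leafI T e z u); first by rewrite sym.
move=> y ezy; case: (eqVneq y u) => // yu; exfalso.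
have zy := @neq_of T e _ _ irr ezy.
case: (eqVneq y v) => [yv|yv].
  by have := allodd z zu zv; rewrite euz sym -yv ezy.
have := allodd y yu yv; case euy: (e u y) => /= evy.
  by apply: (cyc [:: z; y; u]); dtac; rewrite sym.
case: (eqVneq y b) => [yb|yb].
  by subst y; apply: (cyc [:: z; b; a; u]); dtac; rewrite sym.
have ya : y != a by apply/eqP => ya; rewrite ya eua in euy.
by apply: (cyc [:: z; y; v; b; a; u]); dtac; rewrite sym.
Qed.

Theorem lemma1 (T : finType) (e : rel T) (u v : T) :
  is_tree e -> 4 <= #|T| -> u != v -> ~~ Lambda e u v ->
  exactly_one3
    (* (1) two leaves adjacent to a common third vertex *)
    (leaf e u /\ leaf e v /\
       exists w : T, [/\ w != u, w != v, e u w & e v w])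
    (* (2) adjacent, all other vertices leaves adjacent to exactly one of u, v *)
    (e u v /\
       forall z : T, z != u -> z != v -> leaf e z /\ (e z u (+) e z v))
    (* (3) distance 3 via u - w - x - v, all others leaves adjacent to exactly one of u, v *)
    (~~ e u v /\ ~ (exists y : T, e u y && e y v) /\
       exists w x : T,
         [/\ uniq [:: u; w; x; v], e u w, e w x, e x v &
             forall z : T, z \notin [:: u; w; x; v] ->
               leaf e z /\ (e z u (+) e z v)]).
Proof.
move=> [[sym irr] [conn acyc]] n4 uv nL.
have cyc : forall c : seq T, 3 <= size c -> uniq c -> cycle e c -> False.
  by move=> c h1 h2 h3; move: (acyc c h1 h2); rewrite h3.
have par : forall a b, a != b -> a != u -> a != v -> b != u -> b != v ->
    ~~ odd (e u a + e u b + (e v a + e v b)).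
  move=> a b ab au av bu bv; rewrite -nedges2 //; apply: contra nL => od.
  rewrite /Lambda uv /=; apply/existsP; exists [set a; b].
  rewrite /odd_pair od !cards2 uv ab !andbT /=.
  rewrite /disjoint; apply/pred0P => x /=; rewrite !inE.
  apply/negbTE/negP => /andP[/orP[]/eqP-> /orP[]/eqP h].
  1-4: by move: au av bu bv; rewrite h eqxx.
rewrite /exactly_one3.
case: (boolP [exists z, [&& z != u, z != v & odd (e u z + e v z)]]).
-
  move=> /existsP[z0 /and3P[z0u z0v od0]].
  have allodd : forall z, z != u -> z != v -> e u z (+) e v z.
    move=> z zu zv; case: (eqVneq z z0) => [->|zz0].
      by move: od0; case: (e u z0); case: (e v z0).
    have := par z0 z (ltac:(by rewrite eq_sym)) z0u z0v zu zv.
    by move: od0; case: (e u z0); case: (e v z0); case: (e u z); case: (e v z).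
  have allodd' : forall z, z != v -> z != u -> e v z (+) e u z.
    by move=> z h1 h2; rewrite addbC; apply: allodd.
  have vu : v != u by rewrite eq_sym.
  case: (boolP (e u v)) => [euv|neuv].
  + right; left; split.
      move=> [lu [_ [w [wu wv euw _]]]]; have vw := @leafE T e u v w lu euv euw.
      by rewrite -vw eqxx in wv.
    split; last by move=> [h _].
    split=> // z zu zv; split; last by rewrite (sym z u) (sym z v); apply: allodd.
    have := allodd z zu zv; case euz: (e u z) => /= h.
      exact: (@leaf2 T e u v z sym irr cyc allodd euv zu zv euz).
    by apply: (@leaf2 T e v u z sym irr cyc allodd' _ zv zu h); rewrite sym.
  + right; right.
    have [a [b [eab aS bnS]]] := @cross T e [pred z | (z == u) || e u z] u v sym (conn u v)
      (ltac:(by rewrite inE eqxx)) (ltac:(by rewrite inE negb_or eq_sym uv neuv)).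
    move: bnS; rewrite inE negb_or => /andP[bu neub].
    case/orP: aS => [/eqP au | eua]; first by rewrite -au eab in neub.
    have ua := @neq_of T e _ _ irr eua.
    have ab := @neq_of T e _ _ irr eab.
    have au : a != u by rewrite eq_sym.
    have av : a != v by apply/eqP => h; rewrite -h eua in neuv.
    have bv : b != v.
      apply/eqP => h; have := allodd a au av; rewrite eua /= sym -h eab //.
    have evb : e v b by have := allodd b bu bv; rewrite (negbTE neub).
    have ub : u != b by rewrite eq_sym.
    have va : v != a by rewrite eq_sym.
    split.
      move=> [_ [_ [w [wu wv euw evw]]]]; have := allodd w wu wv; by rewrite euw evw.
    split; first by case.
    split=> //; split.
      move=> [y /andP[euy eyv]].
      have yu : y != u by rewrite eq_sym; apply: (@neq_of T e _ _ irr euy).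
      have yv := @neq_of T e _ _ irr eyv.
      by have := allodd y yu yv; rewrite euy sym eyv.
    exists a, b; split => //; first by dtac.
      by rewrite sym.
    move=> z hz.
    have nin : forall y, y \in [:: u; a; b; v] -> z != y by move=> y hy; apply: contraNneq hz => ->.
    have zu : z != u by apply: nin; rewrite !inE eqxx.
    have za : z != a by apply: nin; rewrite !inE eqxx ?orbT.
    have zb : z != b by apply: nin; rewrite !inE eqxx ?orbT.
    have zv : z != v by apply: nin; rewrite !inE eqxx ?orbT.
    split; last by rewrite (sym z u) (sym z v); apply: allodd.
    have := allodd z zu zv; case euz: (e u z) => /= h.
      by apply: (@leaf3 T e u v a b z sym irr cyc allodd eua eab _ uv ub av zu zv za zb euz); rewrite sym.
    by apply: (@leaf3 T e v u b a z sym irr cyc allodd' evb _ _ vu va bu zv zu zb za h); rewrite sym.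
- move=> H.
  have allev : forall z, z != u -> z != v -> e u z = e v z.
    move=> z zu zv; move/existsPn: H => /(_ z); rewrite zu zv /=.
    by case: (e u z); case: (e v z).
  case: (boolP (e u v)) => [euv|neuv].
  + exfalso.
    have : ~: [set u; v] != set0.
      rewrite -card_gt0; have := cardsC [set u; v]; rewrite cards2 uv; lia.
    case/set0Pn => z; rewrite !inE negb_or => /andP[zu zv].
    have [a [b [eab aS bnS]]] := @cross T e [pred x | (x == u) || (x == v)] u z sym (conn u z)
      (ltac:(by rewrite inE eqxx)) (ltac:(by rewrite inE negb_or zu zv)).
    move: bnS; rewrite inE negb_or => /andP[bu bv].
    have [eub evb] : e u b /\ e v b.
      case/orP: aS => /eqP ha; rewrite ha in eab.
        by rewrite eab -(allev b bu bv).
      by rewrite eab (allev b bu bv).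
    have vu : v != u by rewrite eq_sym.
    by apply: (cyc [:: u; v; b]); dtac; rewrite sym.
  + left.
    have [a [b [eab aS bnS]]] := @cross T e [pred x | x == u] u v sym (conn u v)
      (ltac:(by rewrite inE eqxx)) (ltac:(by rewrite inE eq_sym uv)).
    move: aS bnS; rewrite !inE => /eqP au bu; subst a.
    have ub := @neq_of T e _ _ irr eab.
    have bv : b != v by apply/eqP => h; rewrite -h eab in neuv.
    have evb : e v b by rewrite -allev.
    have vu : v != u by rewrite eq_sym.
    split; last split.
    * split; last split.
      - apply: (@leafI T e u b eab) => y euy; apply/eqP; apply/negP => /negP yb.
        have yu : y != u by rewrite eq_sym; apply: (@neq_of T e _ _ irr euy).
        have yv : y != v by apply/eqP => h; rewrite -h euy in neuv.
        have evy : e v y by rewrite -allev.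
        by apply: (cyc [:: u; b; v; y]); dtac; rewrite sym.
      - apply: (@leafI T e v b evb) => y evy; apply/eqP; apply/negP => /negP yb.
        have yv : y != v by rewrite eq_sym; apply: (@neq_of T e _ _ irr evy).
        have yu : y != u by apply/eqP => h; rewrite -h sym evy in neuv.
        have euy : e u y by rewrite allev.
        by apply: (cyc [:: u; b; v; y]); dtac; rewrite sym.
      - by exists b; split; rewrite // eq_sym.
    * by case.
    * move=> [_ [nc _]]; apply: nc; exists b; by rewrite eab sym evb.
Qed.
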